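(* Let $\mathbb{X}$ be a Cartesian closed $k$-differential category and $C$ an object of $\mathbb{X}$. Then the reader monad $\mathbb{R}(C)=([C,-],\mu^C,\eta^C)$ is a Cartesian $k$-differential monad on $\mathbb{X}$, where $[C,-](A)=[C,A]$, $[C,f]=\lambda(f\circ\mathrm{ev}_{C,A})$ for $f:A\to B$, $\eta^C_A=\lambda(\pi_2):A\to[C,A]$ (with $\pi_2:C\times A\to A$), and $\mu^C_A=\lambda(\mathrm{ev}_{C,A}\circ\langle\pi_1,\mathrm{ev}_{C,[C,A]}\rangle):[C,[C,A]]\to[C,A]$. (In term notation: $[C,f](g)=\lambda x.f(g(x))$, $\mu^C_A(F)=\lambda x.F(x)(x)$, $\eta^C_A(a)=\lambda x.a$.)
   Context: Fix a commutative semiring $k$. A left $k$-linear category is a category $\mathbb{X}$ in which each hom-set $\mathbb{X}(A,B)$ is a $k$-module (scalar multiplication $r\cdot f$, addition $+$, zero $0$) such that precomposition is $k$-linear: $(r\cdot f+s\cdot g)\circ x=r\cdot(f\circ x)+s\cdot(g\circ x)$. A map $f$ is $k$-linear if $f\circ(r\cdot x+s\cdot y)=r\cdot(f\circ x)+s\cdot(f\circ y)$ for all suitable $x,y$ and $r,s\in k$. A Cartesian left $k$-linear category is a left $k$-linear category with finite products (terminal object $\ast$, projections $\pi_j:A_1\times\cdots\times A_n\to A_j$, pairing $\langle-,\dots,-\rangle$) in which all projections are $k$-linear. A Cartesian $k$-differential category is a Cartesian left $k$-linear category equipped with a differential combinator $\mathsf{D}$ assigning to each $f:A\to B$ a map $\mathsf{D}[f]:A\times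 A\to B$ such that: [CD.1] $\mathsf{D}[r\cdot f+s\cdot g]=r\cdot\mathsf{D}[f]+s\cdot\mathsf{D}[g]$; [CD.2] $\mathsf{D}[f]\circ\langle\pi_1,r\cdot\pi_2+s\cdot\pi_3\rangle=r\cdot(\mathsf{D}[f]\circ\langle\pi_1,\pi_2\rangle)+s\cdot(\mathsf{D}[f]\circ\langle\pi_1,\pi_3\rangle)$ (as maps $A\times A\times A\to B$); [CD.3] $\mathsf{D}[1_A]=\pi_2$ and, for $\pi_j:A_1\times\cdots\times A_n\to A_j$, $\mathsf{D}[\pi_j]=\pi_{n+j}$; [CD.4] $\mathsf{D}[\langle f_1,\dots,f_n\rangle]=\langle\mathsf{D}[f_1],\dots,\mathsf{D}[f_n]\rangle$; [CD.5] $\mathsf{D}[g\circ f]=\mathsf{D}[g]\circ\langle f\circ\pi_1,\mathsf{D}[f]\rangle$; [CD.6] $\mathsf{D}[\mathsf{D}[f]]\circ\langle\pi_1,0,0,\pi_2\rangle=\mathsf{D}[f]$; [CD.7] $\mathsf{D}[\mathsf{D}[f]]\circ\langle\pi_1,\pi_2,\pi_3,\pi_4\rangle=\mathsf{D}[\mathsf{D}[f]]\circ\langle\pi_1,\pi_3,\pi_2,\pi_4\rangle$ (identifying $(A\times A)\times(A\times A)$ with $A\times A\times A\times A$). A map $f$ is $\mathsf{D}$-linear if $\mathsf{D}[f]=f\circ\pi_2$. For Cartesian left $k$-linear categories $\mathbb{X},\mathbb{Y}$, a strong Cartesian $k$-linear functor is a functor $\mathsf{F}:\mathbb{X}\to\mathbb{Y}$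 such that $\mathsf{F}(\ast)\to\ast$ is an isomorphism, the canonical maps $\omega_{A_1,\dots,A_n}=\langle\mathsf{F}(\pi_1),\dots,\mathsf{F}(\pi_n)\rangle:\mathsf{F}(A_1\times\cdots\times A_n)\to\mathsf{F}(A_1)\times\cdots\times\mathsf{F}(A_n)$ are isomorphisms, and $\mathsf{F}(r\cdot f+s\cdot g)=r\cdot\mathsf{F}(f)+s\cdot\mathsf{F}(g)$. For Cartesian $k$-differential categories, a strong Cartesian $k$-differential functor is a strong Cartesian $k$-linear functor with $\mathsf{D}[\mathsf{F}(f)]=\mathsf{F}(\mathsf{D}[f])\circ\omega^{-1}_{A,A}$ for all $f:A\to B$. A Cartesian $k$-differential monad on a Cartesian $k$-differential category $\mathbb{X}$ is a monad $\mathbb{S}=(\mathsf{S},\mu,\eta)$ on $\mathbb{X}$ such that $\mathsf{S}$ is a strong Cartesian $k$-differential functor and every $\eta_A$ and $\mu_A$ is $\mathsf{D}$-linear. A Cartesian closed $k$-differential category is a Cartesian $k$-differential category $\mathbb{X}$ which is Cartesian closed, with internal hom $[C,B]$, evaluation $\mathrm{ev}_{C,B}:C\times[C,B]\to B$ and currying bijection $\lambda:\mathbb{X}(C\times A,B)\to\mathbb{X}(A,[C,B])$, such that currying is compatible with the $k$-linear structure ($\lambda(r\cdot f+s\cdot g)=r\cdot\lambda(f)+s\cdot\lambda(g)$) and with the differential combinator: for $f:C\times A\to B$, $\mathsf{D}[\lambda(f)]=\lambda\big(\mathsf{D}[f]\circ\langle\langle\pi_1,\pi_2\rangle,\langle 0,\pi_3\rangle\rangle\big)$,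 where the right-hand side curries the map $C\times A\times A\to B$, $(c,a,b)\mapsto\mathsf{D}[f]((c,a),(0,b))$ (the partial derivative of $f$ in its second argument). In term notation: $\frac{\mathsf{d}\,\lambda y.f(y,x)}{\mathsf{d}x}(a)\cdot b=\lambda y.\frac{\mathsf{d}f(y,x)}{\mathsf{d}x}(a)\cdot b$. *)

(* Defs.v *)
From mathcomp Require Import all_boot all_algebra.
Import GRing.Theory.
Set Implicit Arguments. Unset Strict Implicit. Unset Printing Implicit Defensive.
Local Open Scope ring_scope.

(* Raw data of a Cartesian closed left k-linear category with a
   differential combinator.  Finite products are given by a terminal
   object and binary products (n-ary products are iterated). *)
Record ccdc_data (k : comPzSemiRingType) := CCDCData {
  ob : Type;
  hom : ob -> ob -> Type;
  idm : forall A, hom A A;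
  comp : forall A B C, hom B C -> hom A B -> hom A C;
  hzero : forall A B, hom A B;
  hadd : forall A B, hom A B -> hom A B -> hom A B;
  hscale : forall A B, k -> hom A B -> hom A B;
  term : ob;
  bang : forall A, hom A term;
  prod : ob -> ob -> ob;
  p1 : forall A B, hom (prod A B) A;
  p2 : forall A B, hom (prod A B) B;
  pair : forall A B C, hom C A -> hom C B -> hom C (prod A B);
  D : forall A B, hom A B -> hom (prod A A) B;
  exp : ob -> ob -> ob;
  ev : forall C B, hom (prod C (exp C B)) B;
  lam : forall C A B, hom (prod C A) B -> hom A (exp C B)
}.

Arguments ob {k}.
Arguments hom {k c}.
Arguments idm {k c}.
Arguments comp {k c A B C}.
Arguments hzero {k c A B}.
Arguments hadd {k c A B}.
Arguments hscale {k c A B}.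
Arguments term {k c}.
Arguments bang {k c}.
Arguments prod {k c}.
Arguments p1 {k c A B}.
Arguments p2 {k c A B}.
Arguments pair {k c A B C}.
Arguments D {k c A B}.
Arguments exp {k c}.
Arguments ev {k c C B}.
Arguments lam {k c C A B}.

Section CCDC.
Variables (k : comPzSemiRingType) (X : ccdc_data k).

Local Notation "g ∘ f" := (comp g f) (at level 40, left associativity).
Local Notation "r *h f" := (hscale r f) (at level 35, right associativity).
Local Notation "f +h g" := (hadd f g) (at level 50, left associativity).
Local Notation "0h" := hzero.

Definition is_category : Prop :=
  (forall (A B C E : ob X) (h : hom C E) (g : hom B C) (f : hom A B),
      h ∘ (g ∘ f) = (h ∘ g) ∘ f) /\
  (forall (A B : ob X) (f : hom A B), idm B ∘ f = f) /\
  (forall (A B : ob X) (f : hom A B), f ∘ idm A = f).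

Definition hom_modules : Prop :=
  forall A B : ob X,
  (forall f g h : hom A B, f +h (g +h h) = (f +h g) +h h) /\
  (forall f g : hom A B, f +h g = g +h f) /\
  (forall f : hom A B, 0h +h f = f) /\
  (forall (r : k) (f g : hom A B), r *h (f +h g) = r *h f +h r *h g) /\
  (forall (r s : k) (f : hom A B), (r + s) *h f = r *h f +h s *h f) /\
  (forall (r s : k) (f : hom A B), (r * s) *h f = r *h (s *h f)) /\
  (forall f : hom A B, 1 *h f = f) /\
  (forall f : hom A B, 0 *h f = 0h) /\
  (forall r : k, r *h (0h : hom A B) = 0h).

Definition left_linear : Prop :=
  forall (A B C : ob X) (f g : hom B C) (x : hom A B) (r s : k),
    (r *h f +h s *h g) ∘ x = r *h (f ∘ x) +h s *h (g ∘ x).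

Definition k_linear_map (B C : ob X) (f : hom B C) : Prop :=
  forall (A : ob X) (x y : hom A B) (r s : k),
    f ∘ (r *h x +h s *h y) = r *h (f ∘ x) +h s *h (f ∘ y).

Definition cartesian : Prop :=
  (forall (A : ob X) (h : hom A term), h = bang A) /\
  (forall (A B C : ob X) (f : hom C A) (g : hom C B), p1 ∘ pair f g = f) /\
  (forall (A B C : ob X) (f : hom C A) (g : hom C B), p2 ∘ pair f g = g) /\
  (forall (A B C : ob X) (h : hom C (prod A B)), pair (p1 ∘ h) (p2 ∘ h) = h) /\
  (forall A B : ob X, k_linear_map (@p1 _ X A B)) /\
  (forall A B : ob X, k_linear_map (@p2 _ X A B)).

(* axioms [CD.1]--[CD.7] (binary-product form) *)
Definition differential_axioms : Prop :=
  (forall (A B : ob X) (f g : hom A B) (r s : k),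
      D (r *h f +h s *h g) = r *h D f +h s *h D g) /\
  (* CD.2, on (A x A) x A with pi1 = p1 p1, pi2 = p2 p1, pi3 = p2 *)
  (forall (A B : ob X) (f : hom A B) (r s : k),
      let q1 := p1 ∘ (@p1 _ X (prod A A) A) in
      let q2 := p2 ∘ (@p1 _ X (prod A A) A) in
      let q3 := (@p2 _ X (prod A A) A) in
      D f ∘ pair q1 (r *h q2 +h s *h q3)
      = r *h (D f ∘ pair q1 q2) +h s *h (D f ∘ pair q1 q3)) /\
  (forall A : ob X, D (idm A) = p2) /\
  (forall A B : ob X, D (@p1 _ X A B) = p1 ∘ p2) /\
  (forall A B : ob X, D (@p2 _ X A B) = p2 ∘ p2) /\
  (forall (A B C : ob X) (f : hom C A) (g : hom C B),
      D (pair f g) = pair (D f) (D g)) /\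
  (forall (A B C : ob X) (f : hom A B) (g : hom B C),
      D (g ∘ f) = D g ∘ pair (f ∘ p1) (D f)) /\
  (forall (A B : ob X) (f : hom A B),
      D (D f) ∘ pair (pair p1 0h) (pair 0h p2) = D f) /\
  (* CD.7 : symmetry of the second derivative *)
  (forall (A B : ob X) (f : hom A B),
      let P := prod (prod A A) (prod A A) in
      D (D f) ∘ pair (pair (p1 ∘ (@p1 _ X _ _ : hom P _)) (p1 ∘ (@p2 _ X _ _ : hom P _)))
                     (pair (p2 ∘ (@p1 _ X _ _ : hom P _)) (p2 ∘ (@p2 _ X _ _ : hom P _)))
      = D (D f)).

Definition closed_differential : Prop :=
  (forall (C A B : ob X) (f : hom (prod C A) B),
      ev ∘ pair p1 (lam f ∘ p2) = f) /\
  (forall (C A B : ob X) (g : hom A (exp C B)),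
      lam (ev ∘ pair p1 (g ∘ p2)) = g) /\
  (forall (C A B : ob X) (f g : hom (prod C A) B) (r s : k),
      lam (r *h f +h s *h g) = r *h lam f +h s *h lam g) /\
  (forall (C A B : ob X) (f : hom (prod C A) B),
      D (lam f) =
      lam (D f ∘ pair (pair p1 (p1 ∘ p2)) (pair 0h (p2 ∘ p2)))).

Definition is_CCDC : Prop :=
  is_category /\ hom_modules /\ left_linear /\ cartesian /\
  differential_axioms /\ closed_differential.

Definition is_iso (A B : ob X) (f : hom A B) : Prop :=
  exists g : hom B A, g ∘ f = idm A /\ f ∘ g = idm B.

Section Functor.
Variables (Fo : ob X -> ob X) (Fm : forall A B : ob X, hom A B -> hom (Fo A) (Fo B)).
Arguments Fm {A B}.

Definition omega (A B : ob X) : hom (Fo (prod A B)) (prod (Fo A) (Fo B)) :=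
  pair (Fm p1) (Fm p2).

Definition is_endofunctor : Prop :=
  (forall A : ob X, Fm (idm A) = idm (Fo A)) /\
  (forall (A B C : ob X) (f : hom A B) (g : hom B C), Fm (g ∘ f) = Fm g ∘ Fm f).

Definition strong_cartesian_linear : Prop :=
  is_endofunctor /\
  is_iso (bang (Fo term)) /\
  (forall A B : ob X, is_iso (omega A B)) /\
  (forall (A B : ob X) (f g : hom A B) (r s : k),
      Fm (r *h f +h s *h g) = r *h Fm f +h s *h Fm g).

Definition strong_cartesian_differential : Prop :=
  strong_cartesian_linear /\
  (forall (A B : ob X) (f : hom A B) (w : hom (prod (Fo A) (Fo A)) (Fo (prod A A))),
      w ∘ omega A A = idm _ -> omega A A ∘ w = idm _ ->
      D (Fm f) = Fm (D f) ∘ w).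

Definition D_linear (A B : ob X) (f : hom A B) : Prop := D f = f ∘ p2.

Variables (mu : forall A : ob X, hom (Fo (Fo A)) (Fo A))
          (eta : forall A : ob X, hom A (Fo A)).

Definition is_monad : Prop :=
  is_endofunctor /\
  (forall (A B : ob X) (f : hom A B), eta B ∘ f = Fm f ∘ eta A) /\
  (forall (A B : ob X) (f : hom A B), mu B ∘ Fm (Fm f) = Fm f ∘ mu A) /\
  (forall A : ob X, mu A ∘ Fm (mu A) = mu A ∘ mu (Fo A)) /\
  (forall A : ob X, mu A ∘ eta (Fo A) = idm (Fo A)) /\
  (forall A : ob X, mu A ∘ Fm (eta A) = idm (Fo A)).

Definition is_cart_diff_monad : Prop :=
  is_monad /\ strong_cartesian_differential /\
  (forall A : ob X, D_linear (eta A)) /\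
  (forall A : ob X, D_linear (mu A)).
End Functor.

Section Reader.
Variable C : ob X.
Definition reader_Fo (A : ob X) : ob X := exp C A.
Definition reader_Fm (A B : ob X) (f : hom A B) : hom (exp C A) (exp C B) :=
  lam (f ∘ (@ev _ X C A)).
Definition reader_eta (A : ob X) : hom A (exp C A) :=
  lam (@p2 _ X C A).
Definition reader_mu (A : ob X) : hom (exp C (exp C A)) (exp C A) :=
  lam ((@ev _ X C A) ∘ pair p1 (@ev _ X C (exp C A))).
End Reader.

End CCDC.

Arguments is_cart_diff_monad {k X} Fo Fm mu eta.
Arguments reader_Fo {k X} C A.
Arguments reader_Fm {k X} C A B f.
Arguments reader_eta {k X} C A.
Arguments reader_mu {k X} C A.
Arguments is_CCDC {k} X.

(* Main.v *)
Require Import Defs.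
From mathcomp Require Import all_boot all_algebra.

Local Notation "g ⊚ f" := (Defs.comp g f) (at level 40, left associativity).

Ltac S0 a b c d e f g h i j k l m :=
  repeat progress rewrite ?a ?b ?c ?d ?e ?f ?g ?h ?i ?j ?k ?l ?m.

Theorem mainTheorem4 (k : comPzSemiRingType) (X : ccdc_data k)
  (HX : is_CCDC X) (C : ob X) :
  is_cart_diff_monad (reader_Fo C) (reader_Fm C) (reader_mu C) (reader_eta C).
Proof.
case: HX => [[cA [idl idr]] [Hmod [Hll [cartP [diffP closP]]]]].
case: cartP => [Hterm [p1P [p2P [surj [lp1 lp2]]]]].
case: diffP => [CD1 [CD2 [CDid [CDp1 [CDp2 [CDpair [CDcomp [CD6 CD7]]]]]]]].
case: closP => [evlam [lameta [lamlin Dlam]]].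
have compA : forall (A B C0 E : ob X) (h : Defs.hom C0 E) (g : Defs.hom B C0) (f : Defs.hom A B),
   (h ⊚ g) ⊚ f = h ⊚ (g ⊚ f) by move=> *; rewrite cA.
have comp_pair : forall (A B C0 Z : ob X) (f : Defs.hom C0 A) (g : Defs.hom C0 B) (h : Defs.hom Z C0),
   Defs.pair f g ⊚ h = Defs.pair (f ⊚ h) (g ⊚ h).
  by move=> A B C0 Z f g h; rewrite -[LHS]surj !cA p1P p2P.
have pair_id : forall A B : ob X, Defs.pair (@p1 _ X A B) p2 = idm _.
  by move=> A B; rewrite -[RHS](surj _ _ _ (idm _)) !idr.
have beta : forall (Z C0 A B : ob X) (f : Defs.hom (Defs.prod C0 A) B) (a : Defs.hom Z C0) (b : Defs.hom Z A),
   ev ⊚ Defs.pair a (lam f ⊚ b) = f ⊚ Defs.pair a b.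
  move=> Z C0 A B f a b.
  have -> : Defs.pair a (lam f ⊚ b) = Defs.pair p1 (lam f ⊚ p2) ⊚ Defs.pair a b.
    by rewrite comp_pair p1P compA p2P.
  by rewrite cA evlam.
have beta' : forall (C0 A B : ob X) (f : Defs.hom (Defs.prod C0 A) B) (a : Defs.hom A C0),
   ev ⊚ Defs.pair a (lam f) = f ⊚ Defs.pair a (idm _).
  by move=> C0 A B f a; rewrite -[RHS]beta idr.
have lam_nat : forall (Z C0 A B : ob X) (f : Defs.hom (Defs.prod C0 A) B) (h : Defs.hom Z A),
   lam f ⊚ h = lam (f ⊚ Defs.pair p1 (h ⊚ p2)).
  move=> Z C0 A B f h; rewrite -[LHS]lameta; congr lam.
  by rewrite compA beta.
have lam_ev : forall C0 A : ob X, lam (@ev _ X C0 A) = idm _.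
  by move=> C0 A; rewrite -[RHS]lameta idl pair_id idr.
have zero_comp : forall (A B Z : ob X) (h : Defs.hom Z A), (hzero : Defs.hom A B) ⊚ h = hzero.
  move=> A B Z h; have [_ [_ [z0 [_ [_ [_ [_ [s0 _]]]]]]]] := Hmod A B.
  have [_ [_ [z0' [_ [_ [_ [_ [s0' _]]]]]]]] := Hmod Z B.
  have -> : (hzero : Defs.hom A B) = hadd (hscale 0%R hzero) (hscale 0%R hzero) by rewrite s0 z0.
  by rewrite Hll s0' z0'.
have pair_id' : forall A B : ob X, Defs.pair (@p1 _ X A B ⊚ idm _) (p2 ⊚ idm _) = idm _.
  by move=> A B; rewrite !idr pair_id.
clear CD1 CD2 CD6 CD7.
have Fid : forall A : ob X, reader_Fm C _ _ (idm A) = idm _.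
  by move=> A; rewrite /reader_Fm idl lam_ev.
have Fcomp : forall (A B C0 : ob X) (f : Defs.hom A B) (g : Defs.hom B C0),
   reader_Fm C _ _ (g ⊚ f) = reader_Fm C _ _ g ⊚ reader_Fm C _ _ f.
  by move=> A B C0 f g; rewrite /reader_Fm; S0 compA comp_pair p1P p2P idl idr beta beta' lam_nat zero_comp pair_id lam_ev pair_id'.
have Hfun : is_endofunctor (reader_Fm C) by split.
pose w0 A B : Defs.hom (Defs.prod (exp C A) (exp C B)) (exp C (Defs.prod A B)) :=
  lam (Defs.pair (ev ⊚ Defs.pair p1 (p1 ⊚ p2)) (ev ⊚ Defs.pair p1 (p2 ⊚ p2))).
have w0om : forall A B, w0 A B ⊚ omega (reader_Fm C) A B = idm _.
  move=> A B; rewrite /w0 /omega /reader_Fm; S0 compA comp_pair p1P p2P idl idr beta beta' lam_nat zero_comp pair_id lam_ev pair_id'.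
  by rewrite surj lam_ev.
have omw0 : forall A B, omega (reader_Fm C) A B ⊚ w0 A B = idm _.
  move=> A B; rewrite /w0 /omega /reader_Fm; S0 compA comp_pair p1P p2P idl idr beta beta' lam_nat zero_comp pair_id lam_ev pair_id'.
  by rewrite !lameta pair_id.
have Dev : forall A : ob X, D (@ev _ X C A) ⊚ Defs.pair (Defs.pair p1 (p1 ⊚ p2)) (Defs.pair hzero (p2 ⊚ p2))
     = ev ⊚ Defs.pair p1 (p2 ⊚ p2).
  move=> A; have := Dlam _ _ _ (@ev _ X C A); rewrite lam_ev CDid => H.
  by rewrite -[LHS](evlam _ _ _ (D (@ev _ X C A) ⊚ Defs.pair (Defs.pair p1 (p1 ⊚ p2)) (Defs.pair hzero (p2 ⊚ p2)))) -H.
have DevG : forall (A Z : ob X) (a : Defs.hom Z C) (b c : Defs.hom Z (exp C A)),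
   D (@ev _ X C A) ⊚ Defs.pair (Defs.pair a b) (Defs.pair hzero c) = ev ⊚ Defs.pair a c.
  move=> A Z a b c.
  have -> : Defs.pair (Defs.pair a b) (Defs.pair (hzero : Defs.hom Z C) c) =
     (Defs.pair (Defs.pair p1 (p1 ⊚ p2)) (Defs.pair hzero (p2 ⊚ p2)) : Defs.hom (Defs.prod C (Defs.prod (exp C A) (exp C A))) _) ⊚ Defs.pair a (Defs.pair b c).
    by S0 compA comp_pair p1P p2P idl idr beta beta' lam_nat zero_comp pair_id lam_ev pair_id'.
  by rewrite cA Dev; S0 compA comp_pair p1P p2P idl idr beta beta' lam_nat zero_comp pair_id lam_ev pair_id'.
have Hlin : strong_cartesian_linear (reader_Fm C).
  split=> //; split; [|split].
  - exists (lam (bang _)); split.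
      rewrite lam_nat -lam_ev; congr lam; rewrite (Hterm _ ev); apply: Hterm.
    rewrite (Hterm _ (idm _)); apply: Hterm.
  - by move=> A B; exists (w0 A B); split.
  - by move=> A B f g r s; rewrite /reader_Fm Hll lamlin.
have Hdiff : strong_cartesian_differential (reader_Fm C).
  split=> // A B f w Hw1 Hw2.
  have -> : w = w0 A A by rewrite -[w]idr -(omw0 A A) cA Hw1 idl.
  rewrite /reader_Fm /w0 Dlam CDcomp; S0 compA comp_pair p1P p2P idl idr beta beta' lam_nat zero_comp pair_id lam_ev pair_id'.
  rewrite ?DevG; S0 compA comp_pair p1P p2P idl idr beta beta' lam_nat zero_comp pair_id lam_ev pair_id'.
  done.
split; last split; last split.
- split; first done.
  split; [|split; [|split; [|split]]].
  + by move=> A B f; rewrite /reader_eta /reader_Fm; S0 compA comp_pair p1P p2P idl idr beta beta' lam_nat zero_comp pair_id lam_ev pair_id'.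
  + by move=> A B f; rewrite /reader_mu /reader_Fm; S0 compA comp_pair p1P p2P idl idr beta beta' lam_nat zero_comp pair_id lam_ev pair_id'.
  + by move=> A; rewrite /reader_mu /reader_Fm; S0 compA comp_pair p1P p2P idl idr beta beta' lam_nat zero_comp pair_id lam_ev pair_id'.
  + by move=> A; rewrite /reader_mu /reader_eta; S0 compA comp_pair p1P p2P idl idr beta beta' lam_nat zero_comp pair_id lam_ev pair_id'.
  + by move=> A; rewrite /reader_mu /reader_eta /reader_Fm; S0 compA comp_pair p1P p2P idl idr beta beta' lam_nat zero_comp pair_id lam_ev pair_id'.
- done.
- by move=> A; rewrite /D_linear /reader_eta Dlam CDp2; S0 compA comp_pair p1P p2P idl idr beta beta' lam_nat zero_comp pair_id lam_ev pair_id'.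
- move=> A; rewrite /D_linear /reader_mu Dlam CDcomp CDpair CDp1; S0 compA comp_pair p1P p2P idl idr beta beta' lam_nat zero_comp pair_id lam_ev pair_id'.
  rewrite ?DevG; S0 compA comp_pair p1P p2P idl idr beta beta' lam_nat zero_comp pair_id lam_ev pair_id'.
  done.
Qed.
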